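(* Let $G$ be a finite simple graph with maximum degree $d$, equipped with a rotation system, and let $L\ge 2$ be an even integer. Then $G$ has an $L$-localized edge coloring using at most $\min\{d,2L\}+1$ colors.
   Context: A rotation system of $G$ specifies, for each vertex $u$, a cyclic (clockwise) ordering of the edges incident to $u$. For an edge $e$ incident to $u$, if the clockwise cyclic ordering of edges at $u$ is $(l_1,\dots,l_k)$ with $e=l_i$, the $L$-neighborhood of $e$ around $u$ is the set of edges $l_{i-L/2},\dots,l_{i-1},l_{i+1},\dots,l_{i+L/2}$ (indices taken cyclically), i.e., the $L/2$ edges before and the $L/2$ edges after $e$ in the ordering, excluding $e$ itself. An $L$-localized edge coloring is an assignment of colors to the edges of $G$ such that for every edge $e=(u,v)$, no edge in the $L$-neighborhood of $e$ around $u$ and no edge in the $L$-neighborhood of $e$ around $v$ has the same color as $e$. *)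

(* Defs.v *)
From mathcomp Require Import all_boot.
Set Implicit Arguments. Unset Strict Implicit. Unset Printing Implicit Defensive.

(* A finite simple graph is a symmetric irreflexive relation [e] on a finType [V].
   Since the graph is simple, an edge (u,v) incident to u is identified with
   its other endpoint v. *)

Definition deg (V : finType) (e : rel V) (u : V) : nat := #|[set v | e u v]|.
Definition maxdeg (V : finType) (e : rel V) : nat := \max_(u : V) deg e u.

(* A rotation system: for each vertex u, a cyclic (clockwise) ordering
   rot u = (l_1,...,l_k) of the edges at u, each edge (u,v) listed by its
   other endpoint v, each exactly once. *)
Definition is_rotation (V : finType) (e : rel V) (rot : V -> seq V) : Prop :=
  forall u, uniq (rot u) /\ (forall v, (v \in rot u) = e u v).

(* [w] (edge (u,w)) is in the L-neighborhood of the edge (u,v) around u: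
   if rot u = (l_0,...,l_{k-1}) with v = l_i, then w = l_{i+j} or w = l_{i-j}
   (indices mod k) for some 1 <= j <= L/2, and w <> v. *)
Definition in_Lnbhd (V : finType) (rot : V -> seq V) (L : nat) (u v w : V) : bool :=
  let s := rot u in
  let k := size s in
  let i := index v s in
  (w != v) &&
  has (fun j => (w == nth v s ((i + j) %% k))
                || (w == nth v s ((i + (k - j %% k)) %% k)))
      (iota 1 L./2).

Definition edge_coloring (V : finType) (e : rel V) (c : V -> V -> nat) : Prop :=
  forall u v, e u v -> c u v = c v u.

(* L-localized: for every edge (u,v), no edge in its L-neighborhood around u
   has the same color (the condition around v is the instance (v,u)). *)
Definition L_localized (V : finType) (e : rel V) (rot : V -> seq V) (L : nat)
  (c : V -> V -> nat) : Prop :=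
  forall u v w, e u v -> in_Lnbhd rot L u v w -> c u w != c u v.

(* Main.v *)
Require Import Defs.
From mathcomp Require Import all_boot.
From mathcomp Require Import zify.
Set Implicit Arguments. Unset Strict Implicit. Unset Printing Implicit Defensive.



Section Gen.
Variable V : finType.
Implicit Types (F : {set V * V}) (c : V -> V -> nat).

Definition symF F := forall u v, (u,v) \in F -> (v,u) \in F.
Definition okc F c k := forall u v, (u,v) \in F -> c u v = c v u /\ c u v < k.
Definition propc F c := forall u v w, (u,v) \in F -> (u,w) \in F -> c u v = c u w -> v = w.
Definition missb F c a g : bool := [forall w, ((a,w) \in F) ==> (c a w != g)].

Lemma missbP F c a g : reflect (forall w, (a,w) \in F -> c a w != g) (missb F c a g).
Proof.
apply: (iffP forallP) => [H w Hw|H w]; first by move/implyP: (H w); apply.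
by apply/implyP; apply: H.
Qed.

Definition sw (al be g : nat) := if g == al then be else if g == be then al else g.

Lemma swK al be g : sw al be (sw al be g) = g.
Proof.
rewrite /sw; case: (eqVneq g al) => [->|h1].
  by rewrite eqxx; case: (eqVneq be al) => [->|h] //; rewrite eqxx.
case: (eqVneq g be) => [->|h2]; first by rewrite eqxx.
by rewrite (negbTE h1) (negbTE h2).
Qed.

Lemma sw_id al be g : g != al -> g != be -> sw al be g = g.
Proof. by rewrite /sw => /negbTE -> /negbTE ->. Qed.

Definition swc (H : {set V}) al be c := fun u v => if u \in H then sw al be (c u v) else c u v.

Section Swap.
Variables (F : {set V * V}) (c : V -> V -> nat) (k al be : nat) (H : {set V}).
Hypotheses (hsym : symF F) (hok : okc F c k) (hpr : propc F c) (hal : al < k) (hbe : be < k).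
Hypothesis hcl : forall u v, (u,v) \in F -> (c u v == al) || (c u v == be) -> (u \in H) = (v \in H).

Lemma swc_ok : okc F (swc H al be c) k /\ propc F (swc H al be c).
Proof.
split.
  move=> u v uv; have [e1 e2] := hok uv; rewrite /swc.
  have bd : sw al be (c u v) < k by rewrite /sw; case: ifP => //; case: ifP.
  case: (boolP ((c u v == al) || (c u v == be))) => ab.
    rewrite -(hcl uv ab) -e1; by case: (u \in H).
  move/norP: ab => [n1 n2]; rewrite -e1 sw_id //.
  by case: (u \in H); case: (v \in H).
move=> u v w uv uw; rewrite /swc; case: (u \in H); last by apply: hpr.
move=> h; apply: hpr uv uw _.
by rewrite -(swK al be (c u v)) h swK.
Qed.

Lemma swc_miss a g : missb F (swc H al be c) a g =
  if a \in H then missb F c a (sw al be g) else missb F c a g.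
Proof.
case aH: (a \in H); apply/missbP/missbP => h w aw; have := h w aw; rewrite /swc aH //.
  by apply: contra => /eqP ->; rewrite swK.
by apply: contra => /eqP <-; rewrite swK.
Qed.

End Swap.

Section Three.
Variable r : rel V.
Hypothesis rsym : symmetric r.
Hypothesis deg2 : forall a u v w, r a u -> r a v -> r a w -> [\/ u = v, u = w | v = w].

Lemma three_aux (s1 : seq V) : forall t1 a b, r a b -> r b a ->
  uniq (b :: a :: s1) -> uniq (b :: a :: t1) -> path r a s1 -> path r a t1 ->
  last a s1 != last a t1 ->
  (forall u v, r (last a s1) u -> r (last a s1) v -> u = v) ->
  (forall u v, r (last a t1) u -> r (last a t1) v -> u = v) -> False.
Proof.
elim: s1 => [|d s1 IH] [|d' t1] a b rab rba u1 u2 p1 p2 //=.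
- by rewrite eqxx.
- move=> _ h1 _; move: p2 => /= /andP [rad _].
  have := h1 _ _ rab rad; move=> E; move: u2; rewrite E /=.
  by rewrite !in_cons eqxx !orbT.
- move=> _ _ h2; move: p1 => /= /andP [rad _].
  have := h2 _ _ rab rad; move=> E; move: u1; rewrite E /=.
  by rewrite !in_cons eqxx !orbT.
move: p1 p2 => /= /andP [rad p1] /andP [rad' p2] nl h1 h2.
have bd : b != d by apply/negP => /eqP E; move: u1; rewrite E /= !in_cons eqxx !orbT.
have bd' : b != d' by apply/negP => /eqP E; move: u2; rewrite E /= !in_cons eqxx !orbT.
have dd : d = d'.
  case: (deg2 rab rad rad') => [E|E|//]; first by rewrite E eqxx in bd.
  by rewrite E eqxx in bd'.
subst d'.
apply: (IH t1 d a) => //.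
- by rewrite rsym.
- by move: u1; rewrite /= => /andP [].
- by move: u2; rewrite /= => /andP [].
Qed.

Lemma upath x y : connect r x y -> exists s, [/\ path r x s, uniq (x :: s) & last x s = y].
Proof.
move/connectP => [s ps ->]; case: (shortenP ps) => s' ps' us' _; by exists s'.
Qed.

Lemma three_ends x p q : (forall u v, r x u -> r x v -> u = v) ->
  (forall u v, r p u -> r p v -> u = v) -> (forall u v, r q u -> r q v -> u = v) ->
  p != x -> q != x -> p != q -> connect r x p -> connect r x q -> False.
Proof.
move=> hx hp hq px qx pq /upath [s2 [ps2 us2 Ep]] /upath [t2 [pt2 ut2 Eq]].
subst p q.
case: s2 ps2 us2 px hp pq => [|d s2] ps2 us2 px hp pq; first by rewrite eqxx in px.
case: t2 pt2 ut2 qx hq pq => [|d' t2] pt2 ut2 qx hq pq; first by rewrite eqxx in qx.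
move: ps2 pt2 => /= /andP [rxd ps2] /andP [rxd' pt2].
have E := hx _ _ rxd rxd'; subst d'.
apply: (three_aux (s1 := s2) (t1 := t2) (a := d) (b := x)) => //; by rewrite rsym.
Qed.

End Three.
End Gen.



Section Viz.
Variables (V : finType) (e : rel V) (d k : nat).
Hypotheses (e_irr : irreflexive e) (hdeg : forall a, #|[set w | e a w]| <= d) (hdk : d < k).
Variables (F : {set V * V}) (x y0 : V).
Hypotheses (hsym : symF F) (hsub : forall u v, (u,v) \in F -> e u v)
  (hxy0 : e x y0) (nF : (x,y0) \notin F).

Let F' := F :|: [set (x,y0); (y0,x)].

Lemma xny0 : x != y0.
Proof. by apply: contraTneq hxy0 => ->; rewrite e_irr. Qed.

Lemma inF'E u v : ((u,v) \in F') = [|| (u,v) \in F, (u == x) && (v == y0) | (u == y0) && (v == x)].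
Proof. by rewrite /F' !inE -!pair_eqE. Qed.

Lemma symF' : symF F'.
Proof.
move=> u v; rewrite !inF'E => /or3P [/hsym ->//| /andP [/eqP -> /eqP ->] | /andP [/eqP -> /eqP ->]];
by rewrite !eqxx ?orbT.
Qed.

Lemma inF'_F u v : (u,v) \in F' -> u != x -> v != x -> (u,v) \in F.
Proof.
rewrite inF'E => /or3P [//| /andP [/eqP -> _] | /andP [_ /eqP ->]]; by rewrite eqxx.
Qed.

Lemma nxx : (x,x) \notin F'.
Proof.
rewrite inF'E negb_or; apply/andP; split.
  by apply/negP => /hsub; rewrite e_irr.
by rewrite eqxx /= andbT orbb xny0.
Qed.

Lemma nbF' v : (x,v) \in F' -> ((x,v) \in F) || (v == y0).
Proof.
rewrite inF'E eqxx /= => /or3P [->//|->|/andP [/eqP E _]]; rewrite ?orbT //.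
by move: xny0; rewrite E eqxx.
Qed.

Lemma F_F' u v : (u,v) \in F -> (u,v) \in F'.
Proof. by rewrite inF'E => ->. Qed.

Lemma miss_ex (c : V -> V -> nat) a : exists2 g, g < k & missb F c a g.
Proof.
case: (boolP (has (missb F c a) (iota 0 k))) => [/hasP [g]|/hasPn H].
  by rewrite mem_iota add0n => /andP [_ gk] mg; exists g.
exfalso.
pose S := [seq c a w | w <- enum [set w | (a,w) \in F]].
have sub : {subset iota 0 k <= S}.
  move=> g /H ng; case: (boolP (g \in S)) => // gS; case/negP: ng.
  apply/missbP => w aw; apply/negP => /eqP E; move: gS.
  by rewrite -E map_f // mem_enum inE.
have := uniq_leq_size (iota_uniq 0 k) sub; rewrite size_iota size_map -cardE => h.
have : #|[set w | (a,w) \in F]| <= #|[set w | e a w]|.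
  by apply: subset_leq_card; apply/subsetP => w; rewrite !inE => /hsub.
by move: (hdeg a); lia.
Qed.

Definition star (c : V -> V -> nat) (g : V -> nat) :=
  fun u v => if u == x then g v else if v == x then g u else c u v.

Lemma star_ok (c : V -> V -> nat) (g : V -> nat) : okc F c k -> propc F c ->
  (forall v w, (x,v) \in F' -> (x,w) \in F' -> g v = g w -> v = w) ->
  (forall v w, (x,v) \in F' -> (v,w) \in F -> w != x -> g v != c v w) ->
  (forall v, (x,v) \in F' -> g v < k) ->
  okc F' (star c g) k /\ propc F' (star c g).
Proof.
move=> hok hpr G1 G2 G3; split.
  move=> u v uv; rewrite /star; case: (eqVneq u x) => [E|ux].
    subst u; have vx : v != x by apply: contraTneq uv => ->; exact: nxx.
    by rewrite (negbTE vx); split => //; apply: G3.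
  case: (eqVneq v x) => [E|vx].
    by subst v; split => //; apply: G3; apply: symF'.
  exact: hok (inF'_F uv ux vx).
move=> u v w uv uw; rewrite /star; case: (eqVneq u x) => [E|ux].
  by subst u; apply: G1.
case: (eqVneq v x) => [E|vx]; case: (eqVneq w x) => [E'|wx].
- by rewrite E E'.
- move=> h; subst v; have := @G2 u w (symF' uv) (inF'_F uw ux wx) wx.
  by rewrite h eqxx.
- move=> h; subst w; have := @G2 u v (symF' uw) (inF'_F uv ux vx) vx.
  by rewrite h eqxx.
- by apply: hpr; apply: inF'_F.
Qed.


Definition fan (c : V -> V -> nat) (ys : seq V) :=
  [/\ uniq (y0 :: ys), (forall y, y \in ys -> (x,y) \in F) &
      forall i, i < size ys -> missb F c (nth y0 (y0 :: ys) i) (c x (nth y0 ys i))].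

Section Shift.
Variables (c : V -> V -> nat) (ys : seq V) (g0 : nat).
Hypotheses (hok : okc F c k) (hpr : propc F c) (hfan : fan c ys) (hg0 : g0 < k)
  (mx : missb F c x g0) (ml : missb F c (last y0 ys) g0).

Let fs := y0 :: ys.
Let gs v := if v \in fs then (if index v fs < size ys then c x (nth y0 ys (index v fs)) else g0)
            else c x v.

Lemma gspec v : (x,v) \in F' ->
  [\/ exists2 i, i < size ys & v = nth y0 fs i /\ gs v = c x (nth y0 ys i),
      v = last y0 ys /\ gs v = g0
    | [/\ v \notin fs, (x,v) \in F & gs v = c x v]].
Proof.
move=> xv; rewrite /gs; case: (boolP (v \in fs)) => vf.
  case: (ltnP (index v fs) (size ys)) => hi.
    by apply: Or31; exists (index v fs) => //; rewrite nth_index.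
  apply: Or32; split => //.
  have : index v fs < size fs by rewrite index_mem.
  rewrite /= ltnS => hi'; have E : index v fs = size ys by apply/eqP; rewrite eqn_leq hi hi'.
  by rewrite -(nth_index y0 vf) E -[size ys]/((size fs).-1) nth_last.
apply: Or33; split => //.
have := nbF' xv; case/orP => // /eqP E; move: vf; by rewrite E mem_head.
Qed.

Lemma ysF i : i < size ys -> (x, nth y0 ys i) \in F.
Proof. by case: hfan => _ h _ hi; apply: h; rewrite mem_nth. Qed.

Lemma uys : uniq ys.
Proof. by case: hfan => /= /andP []. Qed.

Lemma shift_ok : exists c', okc F' c' k /\ propc F' c'.
Proof.
exists (star c gs); apply: star_ok => //.
- move=> v w xv xw.
  have nm : forall i, i < size ys -> c x (nth y0 ys i) != g0.
    by move=> i hi; move/missbP: mx; apply; apply: ysF.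
  have nf : forall i, i < size ys -> nth y0 ys i \in fs.
    by move=> i hi; rewrite in_cons mem_nth ?orbT.
  case: (gspec xv) => [[i hi [-> ->]]|[-> ->]|[vf xv' ->]];
  case: (gspec xw) => [[j hj [-> ->]]|[-> ->]|[wf xw' ->]] //.
  + move=> h; have := hpr (ysF hi) (ysF hj) h; move/eqP.
    by rewrite nth_uniq ?uys // => /eqP ->.
  + by move=> h; move: (nm _ hi); rewrite h eqxx.
  + by move=> h; have := hpr (ysF hi) xw' h => E; move: wf; rewrite -E nf.
  + by move=> h; move: (nm _ hj); rewrite h eqxx.
  + by move=> h; move/missbP: mx => /(_ _ xw'); rewrite h eqxx.
  + by move=> h; have := hpr (ysF hj) xv' (esym h) => E; move: vf; rewrite -E nf.
  + by move=> h; move/missbP: mx => /(_ _ xv'); rewrite h eqxx.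
  + by apply: hpr.
- move=> v w xv vw wx.
  case: (gspec xv) => [[i hi [E ->]]|[E ->]|[vf xv' ->]].
  + case: hfan => _ _ /(_ _ hi); rewrite -/fs -E => /missbP /(_ _ vw).
    by rewrite eq_sym.
  + by move/missbP: ml => /(_ w); rewrite -E eq_sym; apply.
  + have [E _] := hok xv'; rewrite E; apply/negP => /eqP h.
    by move: wx; rewrite (hpr (hsym xv') vw h) eqxx.
- move=> v xv; case: (gspec xv) => [[i hi [_ ->]]|[_ ->]|[_ xv' ->]] //.
  + by case: (hok (ysF hi)).
  + by case: (hok xv').
Qed.

End Shift.

Lemma fan_mem c ys v : fan c ys -> v \in y0 :: ys -> e x v.
Proof.
case=> _ h _; rewrite in_cons => /orP [/eqP ->//|/h]; exact: hsub.
Qed.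

Lemma last_take (ys : seq V) m : m <= size ys -> last y0 (take m ys) = nth y0 (y0 :: ys) m.
Proof.
move=> hm; rewrite -[last y0 _]/(last y0 (y0 :: take m ys)) -nth_last /= size_take.
case: ltnP => h; last first.
  have E : m = size ys by apply/eqP; rewrite eqn_leq hm h.
  by rewrite E take_size.
by case: m hm h => //= m hm h; rewrite nth_take.
Qed.

Lemma step c ys : okc F c k -> propc F c -> fan c ys ->
  (exists c', okc F' c' k /\ propc F' c') \/ (exists z, fan c (rcons ys z)).
Proof.
move=> hok hpr hf.
have [g gk ml] := miss_ex c (last y0 ys).
case mxg: (missb F c x g); first by left; apply: (shift_ok hok hpr hf gk mxg ml).
move/negbT: mxg; rewrite /missb negb_forall => /existsP [z]; rewrite negb_imply => /andP [xz /negPn/eqP cz].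
have [huniq hmem hmis] := hf.
case zf: (z \in y0 :: ys); last first.
  right; exists z; split.
  - by rewrite -rcons_cons rcons_uniq zf.
  - by move=> y; rewrite mem_rcons in_cons => /orP [/eqP ->|/hmem].
  move=> i; rewrite size_rcons ltnS leq_eqVlt => /orP [/eqP Ei|hi].
    rewrite -rcons_cons nth_rcons /= ltnS Ei leqnn nth_rcons ltnn eqxx cz.
    by rewrite -[size ys]/((size (y0 :: ys)).-1) nth_last.
  by rewrite -rcons_cons !nth_rcons /= ltnS (ltnW hi) hi; apply: hmis.
left.
have [al alk mxa] := miss_ex c x.
set fs := y0 :: ys in zf huniq.
have zy0 : z != y0 by apply: contraNneq nF => <-.
set j := index z fs.
have hj : j < size fs by rewrite index_mem.
have j0 : 0 < j by rewrite lt0n; apply: contra zy0 => /eqP h; rewrite -(nth_index y0 zf) -/j h.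
set jj := j.-1.
have hjj : jj < size ys by rewrite /jj -ltnS prednK.
have Ez : z = nth y0 ys jj by rewrite -(nth_index y0 zf) -/j -[j]prednK.
set p := nth y0 fs jj.
set q := last y0 ys.
have mp : missb F c p g by rewrite -cz Ez; apply: hmis.
have uys : uniq ys by move: huniq => /= /andP [].
have alg : al != g by apply: contraTneq mxa => ->; rewrite negb_forall; apply/existsP; exists z; rewrite xz cz eqxx.
pose r := fun u v => ((u,v) \in F) && ((c u v == al) || (c u v == g)).
have rsym : symmetric r.
  by move=> u v; rewrite /r; apply/idP/idP => /andP [uv h]; have [E _] := hok _ _ uv;
    rewrite (hsym uv) /= -E h.
have col2 : forall a u v, r a u -> r a v -> c a u != al -> c a v != al -> u = v.
  move=> a u v /andP [au /orP [/eqP h|/eqP h]] /andP [av /orP [/eqP h'|/eqP h']];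
  rewrite ?h ?h' ?eqxx // => _ _; apply: hpr au av _; by rewrite h h'.
have col2' : forall a u v, r a u -> r a v -> c a u != g -> c a v != g -> u = v.
  move=> a u v /andP [au /orP [/eqP h|/eqP h]] /andP [av /orP [/eqP h'|/eqP h']];
  rewrite ?h ?h' ?eqxx // => _ _; apply: hpr au av _; by rewrite h h'.
have hx : forall u v, r x u -> r x v -> u = v.
  move=> u v ru rv; apply: (col2 _ _ _ ru rv).
    by move/missbP: mxa; apply; case/andP: ru.
  by move/missbP: mxa; apply; case/andP: rv.
have hmiss : forall a, missb F c a g -> forall u v, r a u -> r a v -> u = v.
  move=> a ma u v ru rv; apply: (col2' _ _ _ ru rv).
    by move/missbP: ma; apply; case/andP: ru.
  by move/missbP: ma; apply; case/andP: rv.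
have rF : forall a u, r a u -> (a,u) \in F by move=> ? ? /andP [].
have deg2 : forall a u v w, r a u -> r a v -> r a w -> [\/ u = v, u = w | v = w].
  move=> a u v w ru rv rw.
  case: (eqVneq (c a u) al) => hu; case: (eqVneq (c a v) al) => hv;
  case: (eqVneq (c a w) al) => hw.
  all: try (by apply: Or31; apply: (hpr _ _ _ (rF _ _ ru) (rF _ _ rv)); rewrite hu hv).
  all: try (by apply: Or32; apply: (hpr _ _ _ (rF _ _ ru) (rF _ _ rw)); rewrite hu hw).
  all: try (by apply: Or33; apply: (hpr _ _ _ (rF _ _ rv) (rF _ _ rw)); rewrite hv hw).
  all: try (by apply: Or31; apply: (col2 _ _ _ ru rv)).
  all: try (by apply: Or32; apply: (col2 _ _ _ ru rw)).
  all: try (by apply: Or33; apply: (col2 _ _ _ rv rw)).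
have px : p != x.
  apply/negP => /eqP E; have : e x p by apply: (fan_mem hf); rewrite mem_nth //= ltnW.
  by rewrite E e_irr.
have qx : q != x.
  apply/negP => /eqP E; have : e x q by apply: (fan_mem hf); rewrite /q mem_last.
  by rewrite E e_irr.
have pq : p != q.
  rewrite /p /q -[last _ _]/(last y0 fs) -nth_last nth_uniq //=; last by rewrite ltnW.
  by move: hjj; rewrite neq_ltn => ->.
have csym := sym_connect_sym rsym.
have oth : forall i, i < size ys -> i != jj -> c x (nth y0 ys i) != al /\ c x (nth y0 ys i) != g.
  move=> i hi ij; split.
    by move/missbP: mxa; apply; apply: hmem; rewrite mem_nth.
  apply/negP => /eqP h; have := hpr _ _ _ (hmem _ (mem_nth y0 hi)) xz; rewrite h cz => /(_ erefl).
  by move/eqP; rewrite Ez nth_uniq // (negbTE ij).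
have swcl : forall a0, forall u v, (u,v) \in F -> (c u v == al) || (c u v == g) ->
    (u \in [set w | connect r a0 w]) = (v \in [set w | connect r a0 w]).
  move=> a0 u v uv h; rewrite !inE; apply: (same_connect1r csym); by rewrite /r uv h.
have swx : forall H : {set V}, x \notin H -> forall v, swc H al g c x v = c x v.
  by move=> H xH v; rewrite /swc (negbTE xH).
have swfan : forall (H : {set V}) (ys' : seq V), x \notin H -> uniq (y0 :: ys') -> {subset ys' <= ys} ->
    (forall i, i < size ys' -> nth y0 ys' i = nth y0 ys i /\ nth y0 (y0 :: ys') i = nth y0 fs i) ->
    (jj < size ys' -> p \notin H) -> fan (swc H al g c) ys'.
  move=> H ys' xH u' sub hnth hp; split => //; first by move=> y /sub /hmem.
  move=> i hi; have [E1 E2] := hnth i hi; rewrite swx // E1 E2 swc_miss.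
  have hi' : i < size ys.
    rewrite ltnNge; apply/negP => h; have := sub _ (mem_nth y0 hi); rewrite E1 nth_default //.
    by move: huniq => /= /andP [/negP].
  case: (eqVneq i jj) => [Eij|ij].
    subst i; rewrite -/p -Ez cz (negbTE (hp hi)); exact: mp.
  have [n1 n2] := oth i hi' ij; rewrite sw_id //.
  by case: ifP => _; apply: hmis.
case cp: (connect r x p).
  case cq: (connect r x q).
    by exfalso; apply: (three_ends rsym deg2 hx (hmiss _ mp) (hmiss _ ml) px qx pq cp cq).
  pose H := [set w | connect r q w].
  have xH : x \notin H by rewrite inE csym cq.
  have [ok1 pr1] := swc_ok hok hpr alk gk (swcl q).
  apply: (shift_ok (ys := ys) ok1 pr1 _ alk).
  - apply: swfan => //.
    by move=> _; rewrite inE; apply/negP => cqp; move: cq; rewrite (connect_trans cp) // csym.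
  - by rewrite swc_miss (negbTE xH).
  - by rewrite swc_miss inE connect0 /sw eqxx.
pose H := [set w | connect r p w].
have xH : x \notin H by rewrite inE csym cp.
have [ok1 pr1] := swc_ok hok hpr alk gk (swcl p).
have hjj' : jj <= size ys by apply: ltnW.
apply: (shift_ok (ys := take jj ys) ok1 pr1 _ alk).
- apply: swfan => //.
  + by rewrite -[y0 :: take jj ys]/(take jj.+1 fs) take_uniq.
  + by move=> y /mem_take.
  + move=> i; rewrite size_take hjj => hi; rewrite nth_take //.
    by split => //; rewrite -[y0 :: take jj ys]/(take jj.+1 fs) nth_take // ltnW.
  + by rewrite size_take hjj ltnn.
- by rewrite swc_miss (negbTE xH).
- by rewrite last_take // swc_miss inE connect0 /sw eqxx.
Qed.

Lemma uniq_card (s : seq V) : uniq s -> size s <= #|V|.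
Proof. by move/card_uniqP <-; apply: max_card. Qed.

Lemma viz_ext c : okc F c k -> propc F c -> exists c', okc F' c' k /\ propc F' c'.
Proof.
move=> hok hpr.
suff H : forall n ys, #|V| - size ys <= n -> fan c ys -> exists c', okc F' c' k /\ propc F' c'.
  apply: (H #|V| [::]); first by rewrite subn0.
  by split => //= i.
elim=> [|n IH] ys hn hf; case: (step hok hpr hf) => // [[z hz]];
  have := hz; case=> hu _ _; have := uniq_card hu; rewrite /= size_rcons => hs.
  by exfalso; move: hn hs; move: (#|V|) (size ys) => a b; lia.
by apply: (IH (rcons ys z)) => //; rewrite size_rcons; move: hn hs; move: (#|V|) (size ys) => a b; lia.
Qed.

End Viz.



Section Grow.
Variables (V : finType) (e : rel V).
Hypothesis e_sym : symmetric e.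

Lemma grow (P : {set V * V} -> Prop) :
  (forall F u v, symF F -> (forall a b, (a,b) \in F -> e a b) -> e u v -> (u,v) \notin F ->
     P F -> P (F :|: [set (u,v); (v,u)])) ->
  P set0 -> P [set p | e p.1 p.2].
Proof.
move=> hext h0.
set E := [set p | e p.1 p.2].
suff H : forall n F, #|E :\: F| <= n -> symF F -> (forall a b, (a,b) \in F -> e a b) -> P F -> P E.
  by apply: (H #|E :\: set0| set0) => // a b; rewrite inE.
elim=> [|n IH] F hn hs hsub hP; case: (set_0Vmem (E :\: F)) => [h|[[u v] huv]].
- have -> : E = F; last by [].
  apply/eqP; rewrite eqEsubset -setD_eq0 h eqxx /=.
  by apply/subsetP => -[a b] /hsub; rewrite inE.
- by move: hn; rewrite leqn0 => /eqP /cards0_eq h; rewrite h inE in huv.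
- have -> : E = F; last by [].
  apply/eqP; rewrite eqEsubset -setD_eq0 h eqxx /=.
  by apply/subsetP => -[a b] /hsub; rewrite inE.
move: huv; rewrite !inE /= => /andP [nuv euv].
set F' := F :|: [set (u,v); (v,u)].
apply: (IH F').
- have : #|E :\: F'| < #|E :\: F|.
    apply: proper_card; apply/properP; split; first by apply: setDS; apply: subsetUl.
    exists (u,v); first by rewrite !inE nuv.
    by rewrite !inE (eqxx (u,v)) orbT.
  by move: hn; lia.
- move=> a b; rewrite !inE -!pair_eqE /= => /or3P [/hs ->//| /andP [/eqP -> /eqP ->] | /andP [/eqP -> /eqP ->]];
  by rewrite !eqxx ?orbT.
- move=> a b; rewrite !inE -!pair_eqE /= => /or3P [/hsub //| /andP [/eqP -> /eqP ->] | /andP [/eqP -> /eqP ->]] //.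
  by rewrite e_sym.
- by apply: hext.
Qed.

End Grow.

Section Lnb.
Variables (V : finType) (rot : V -> seq V) (L : nat).

Lemma arith1 i j k : 0 < k -> i < k -> ((i + j) %% k + (k - j %% k)) %% k = i.
Proof.
move=> kp ik; rewrite modnDml.
have -> : i + j + (k - j %% k) = (j %/ k).+1 * k + i.
  rewrite mulSn {1}(divn_eq j k); move: (j %/ k * k) (j %% k) (ltn_pmod j kp) => A B hB; lia.
by rewrite modnMDl modn_small.
Qed.

Lemma arith2 i j k : 0 < k -> i < k -> ((i + (k - j %% k)) %% k + j) %% k = i.
Proof.
move=> kp ik; rewrite modnDml.
have -> : i + (k - j %% k) + j = (j %/ k).+1 * k + i.
  rewrite mulSn {2}(divn_eq j k); move: (j %/ k * k) (j %% k) (ltn_pmod j kp) => A B hB; lia.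
by rewrite modnMDl modn_small.
Qed.

Lemma Lnb_mem u v w : v \in rot u -> in_Lnbhd rot L u v w -> w \in rot u.
Proof.
move=> vr.
have kp : 0 < size (rot u) by case: (rot u) vr.
move=> /andP [_ /hasP [j _ /orP [/eqP ->|/eqP ->]]]; apply: mem_nth; exact: ltn_pmod.
Qed.

Lemma Lnb_sym u v w : uniq (rot u) -> v \in rot u -> in_Lnbhd rot L u v w -> in_Lnbhd rot L u w v.
Proof.
move=> ur vr h; have wr := Lnb_mem vr h; move: h.
have kp : 0 < size (rot u) by case: (rot u) vr.
have ik : index v (rot u) < size (rot u) by rewrite index_mem.
rewrite /in_Lnbhd /=.
move=> /andP [wv /hasP [j hj /orP [/eqP E|/eqP E]]]; rewrite eq_sym wv /=; apply/hasP; exists j => //.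
  have -> : index w (rot u) = (index v (rot u) + j) %% size (rot u) by rewrite E index_uniq // ltn_pmod.
  by rewrite arith1 // nth_index // eqxx orbT.
have -> : index w (rot u) = (index v (rot u) + (size (rot u) - j %% size (rot u))) %% size (rot u).
  by rewrite E index_uniq // ltn_pmod.
by rewrite arith2 // nth_index // eqxx.
Qed.

Lemma Lnb_size u v : ~~ odd L -> uniq (rot u) ->
  size [seq w <- rot u | in_Lnbhd rot L u v w] <= L.
Proof.
move=> ev ur; set s := rot u; set k := size s; set i := index v s.
pose cand := [seq nth v s ((i + j) %% k) | j <- iota 1 L./2] ++
             [seq nth v s ((i + (k - j %% k)) %% k) | j <- iota 1 L./2].
apply: (@leq_trans (size cand)); last first.
  by rewrite size_cat !size_map size_iota addnn; have := odd_double_half L; rewrite (negbTE ev) add0n => ->.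
apply: uniq_leq_size; first exact: filter_uniq.
move=> w; rewrite mem_filter => /andP [/andP [_ /hasP [j hj /orP [/eqP E|/eqP E]]] _];
rewrite mem_cat E; apply/orP; [left|right]; by apply/mapP; exists j.
Qed.

End Lnb.



Section Greedy.
Variables (V : finType) (e : rel V) (rot : V -> seq V) (L : nat).
Hypotheses (e_sym : symmetric e) (e_irr : irreflexive e) (hrot : is_rotation e rot) (hL : ~~ odd L).

Definition locc (F : {set V * V}) (c : V -> V -> nat) :=
  forall u v w, (u,v) \in F -> (u,w) \in F -> in_Lnbhd rot L u v w -> c u w != c u v.

Lemma greedy_ext (F : {set V * V}) u0 v0 c : symF F -> (forall a b, (a,b) \in F -> e a b) ->
  e u0 v0 -> (u0,v0) \notin F -> okc F c (2 * L).+1 -> locc F c ->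
  exists c', okc (F :|: [set (u0,v0); (v0,u0)]) c' (2 * L).+1 /\ locc (F :|: [set (u0,v0); (v0,u0)]) c'.
Proof.
move=> hs hsub e0 n0 hok hloc.
pose S := [seq c u0 w | w <- [seq w <- rot u0 | in_Lnbhd rot L u0 v0 w]] ++
          [seq c v0 w | w <- [seq w <- rot v0 | in_Lnbhd rot L v0 u0 w]].
have hS : size S <= 2 * L.
  rewrite size_cat !size_map mul2n -addnn leq_add //; apply: Lnb_size => //; exact: (proj1 (hrot _)).
have [g gk gS] : exists2 g, g < (2 * L).+1 & g \notin S.
  case: (boolP (all (fun g => g \in S) (iota 0 (2 * L).+1))) => [/allP h|/allPn [g hg gS]].
    by exfalso; have := uniq_leq_size (iota_uniq 0 _) h; rewrite size_iota; move: hS; move: (size S) => m; lia.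
  by exists g => //; move: hg; rewrite mem_iota.
have nS1 : forall w, w \in rot u0 -> in_Lnbhd rot L u0 v0 w -> c u0 w != g.
  move=> w wr h; apply: contraNneq gS => <-; rewrite mem_cat; apply/orP; left.
  by apply: map_f; rewrite mem_filter h.
have nS2 : forall w, w \in rot v0 -> in_Lnbhd rot L v0 u0 w -> c v0 w != g.
  move=> w wr h; apply: contraNneq gS => <-; rewrite mem_cat; apply/orP; right.
  by apply: map_f; rewrite mem_filter h.
pose nw u v := ((u == u0) && (v == v0)) || ((u == v0) && (v == u0)).
have inF' : forall u v, ((u,v) \in F :|: [set (u0,v0); (v0,u0)]) = ((u,v) \in F) || nw u v.
  by move=> u v; rewrite !inE -!pair_eqE /= orbA.
have nwsym : forall u v, nw u v = nw v u.
  by move=> u v; rewrite /nw orbC; congr (_ || _); rewrite andbC.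
have nwF : forall u v, nw u v -> (u,v) \notin F.
  move=> u v /orP [/andP [/eqP -> /eqP ->]|/andP [/eqP -> /eqP ->]] //.
  by apply: contra n0 => /hs.
have F'e : forall u v, (u,v) \in F :|: [set (u0,v0); (v0,u0)] -> e u v.
  move=> u v; rewrite inF' => /orP [/hsub //|/orP [/andP [/eqP -> /eqP ->]|/andP [/eqP -> /eqP ->]]] //.
  by rewrite e_sym.
exists (fun u v => if nw u v then g else c u v); split.
  move=> u v; rewrite inF' nwsym; case: (boolP (nw v u)) => /= _; rewrite ?orbT ?orbF // => uv.
  exact: hok.
move=> u v w; rewrite !inF' => uv uw h.
have wv : w != v by case/andP: h.
case: (boolP (nw u v)) => nuv; case: (boolP (nw u w)) => nuw /=.
- exfalso; move: wv nuv nuw; rewrite /nw.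
  move=> wv /orP [/andP [/eqP E1 /eqP E2] | /andP [/eqP E1 /eqP E2]]
    /orP [/andP [/eqP E3 /eqP E4] | /andP [/eqP E3 /eqP E4]]; subst; by rewrite ?eqxx in wv.
- rewrite (negbTE nuw) orbF in uw.
  have wr : w \in rot u by rewrite (proj2 (hrot u)); apply: hsub.
  by case/orP: nuv wr h => /andP [/eqP E1 /eqP E2]; rewrite E1 E2 => wr h; [apply: nS1|apply: nS2].
- rewrite (negbTE nuv) orbF in uv.
  have wr : w \in rot u by rewrite (proj2 (hrot u)); apply: F'e; rewrite inF' uw.
  have vr : v \in rot u by rewrite (proj2 (hrot u)); apply: hsub.
  have h' := Lnb_sym (proj1 (hrot u)) vr h.
  rewrite eq_sym.
  by case/orP: nuw vr h' => /andP [/eqP E1 /eqP E2]; rewrite E1 E2 => vr h'; [apply: nS1|apply: nS2].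
- rewrite (negbTE nuv) orbF in uv; rewrite (negbTE nuw) orbF in uw; exact: hloc.
Qed.

End Greedy.

Theorem mainTheorem3 (V : finType) (e : rel V)
  (e_sym : symmetric e) (e_irr : irreflexive e)
  (rot : V -> seq V) (hrot : is_rotation e rot)
  (L : nat) (hL2 : 2 <= L) (hLeven : ~~ odd L) :
  exists c : V -> V -> nat,
    [/\ edge_coloring e c, L_localized e rot L c &
        forall u v, e u v -> c u v < (minn (maxdeg e) (2 * L)).+1].
Proof.
have hdeg : forall a, #|[set w | e a w]| <= maxdeg e.
  by move=> a; rewrite /maxdeg; apply: (@leq_bigmax _ (fun u => deg e u) a).
have inE' : forall u v, ((u,v) \in [set p | e p.1 p.2]) = e u v by move=> u v; rewrite inE.
case: (leqP (maxdeg e) (2 * L)) => hd.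
  have [c [hok hpr]] : exists c, okc [set p | e p.1 p.2] c (maxdeg e).+1 /\
                                 propc [set p | e p.1 p.2] c.
    apply: (grow e_sym (P := fun F => exists c, okc F c (maxdeg e).+1 /\ propc F c)).
      move=> F u v hs hsub euv nF [c [hok hpr]].
      exact: (viz_ext e_irr hdeg (ltnSn _) hs hsub euv nF hok hpr).
    by exists (fun _ _ => 0); split => u v; rewrite inE.
  exists c; split.
  - by move=> u v uv; case: (hok u v); rewrite ?inE'.
  - move=> u v w uv h; have vr : v \in rot u by rewrite (proj2 (hrot u)).
    have wr := Lnb_mem vr h.
    apply/negP => /eqP E; have := hpr u w v; rewrite !inE' -(proj2 (hrot u)) => /(_ wr uv E) Ewv.
    by move: h; rewrite /in_Lnbhd Ewv eqxx.
  - move=> u v uv; have E : minn (maxdeg e) (2 * L) = maxdeg e by apply/minn_idPl.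
    by case: (hok u v); rewrite ?inE'.
have [c [hok hloc]] : exists c, okc [set p | e p.1 p.2] c (2 * L).+1 /\
                               locc rot L [set p | e p.1 p.2] c.
  apply: (grow e_sym (P := fun F => exists c, okc F c (2 * L).+1 /\ locc rot L F c)).
    move=> F u v hs hsub euv nF [c [hok hloc]].
    exact: (greedy_ext e_sym hrot hLeven hs hsub euv nF hok hloc).
  by exists (fun _ _ => 0); split => u v; rewrite inE.
exists c; split.
- by move=> u v uv; case: (hok u v); rewrite ?inE'.
- move=> u v w uv h; have vr : v \in rot u by rewrite (proj2 (hrot u)).
  have wr := Lnb_mem vr h.
  by apply: hloc; rewrite // inE' -(proj2 (hrot u)).
- move=> u v uv; have E : minn (maxdeg e) (2 * L) = 2 * L by apply/minn_idPr; apply: ltnW.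
  by rewrite ?E; case: (hok u v); rewrite ?inE'.
Qed.
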